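(* Let $\mathcal{C}$ be a covering of a finite set $E$ such that the distinct indiscernible neighborhoods $I(x_1),\dots,I(x_s)$ form a partition of $E$, and let $M(E,\mathcal{I}_{SH}(\mathcal{C}))$ be the matroid whose closure operator is $SH$. Then: (1) $X$ is a base of this matroid if and only if $|X\cap I(x_i)|=1$ for all $i\in\{1,\dots,s\}$; moreover the matroid has exactly $|I(x_1)||I(x_2)|\cdots|I(x_s)|$ bases. (2) For all $X\subseteq E$, its rank is $r_{SH}(X)=|\{I(x_i):I(x_i)\cap X\neq\emptyset,\ i=1,\dots,s\}|$. (3) $X$ is dependent if and only if there exists $i$ with $|I(x_i)\cap X|>1$. (4) $X$ is a circuit if and only if there exists $i$ with $X\subseteq I(x_i)$ and $|X|=2$.
   Context: A covering of $E$ is a family of nonempty subsets of $E$ with union $E$. $I(x)=\bigcup\{K\in\mathcal{C}:x\in K\}$ and $SH(X)=\bigcup\{K\in\mathcal{C}:K\cap X\neq\emptyset\}$. Under the partition hypothesis $SH$ is the closure operator of a matroid on $E$ with independent sets $\mathcal{I}_{SH}(\mathcal{C})=\{I\subseteq E:x\notin SH(I-\{x\})\ \forall x\in I\}$. A base is a maximal independent set, a circuit a minimal dependent set, and the rank of $X$ is the maximum size of an independent subset of $X$. *)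

(* Defs.v *)
(* The finite ground set E is the whole finite type T. *)
From mathcomp Require Import all_boot.
Set Implicit Arguments. Unset Strict Implicit. Unset Printing Implicit Defensive.

Section Covering.
Variable T : finType.

Definition is_covering (C : {set {set T}}) : Prop :=
  (forall K, K \in C -> K != set0) /\ cover C = [set: T].

Definition Ind (C : {set {set T}}) (x : T) : {set T} :=
  \bigcup_(K in C | x \in K) K.

Definition SH (C : {set {set T}}) (X : {set T}) : {set T} :=
  \bigcup_(K in C | K :&: X != set0) K.

Definition Inds (C : {set {set T}}) : {set {set T}} := [set Ind C x | x : T].

Definition partition_hyp (C : {set {set T}}) : Prop :=
  partition (Inds C) [set: T].

Definition indepSH (C : {set {set T}}) (I : {set T}) : bool :=
  [forall x in I, x \notin SH C (I :\ x)].

Definition baseSH (C : {set {set T}}) (X : {set T}) : bool :=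
  maxset (indepSH C) X.

Definition circuitSH (C : {set {set T}}) (X : {set T}) : bool :=
  minset (fun Y => ~~ indepSH C Y) X.

Definition rankSH (C : {set {set T}}) (X : {set T}) : nat :=
  \max_(Y : {set T} | (Y \subset X) && indepSH C Y) #|Y|.

End Covering.

(* Main.v *)
Require Import Defs.
From mathcomp Require Import all_boot.
Set Implicit Arguments. Unset Strict Implicit. Unset Printing Implicit Defensive.

Section P.
Variable T : finType.
Variable C : {set {set T}}.
Hypothesis hcov : is_covering C.
Hypothesis hpart : partition_hyp C.

Local Notation blk := (Ind C).

Lemma blk_self x : x \in blk x.
Proof.
have : x \in cover C by rewrite hcov.2 in_setT.
case/bigcupP => K KC xK. by apply/bigcupP; exists K => //; rewrite KC xK.
Qed.

Lemma blk_Inds x : blk x \in Inds C.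
Proof. by apply/imsetP; exists x. Qed.

Lemma Inds_eq B1 B2 x : B1 \in Inds C -> B2 \in Inds C -> x \in B1 -> x \in B2 -> B1 = B2.
Proof.
move=> h1 h2 x1 x2; case/and3P: hpart => _ /trivIsetP tr _.
case: (eqVneq B1 B2) => // ne.
by rewrite (disjointFr (tr _ _ h1 h2 ne) x1) in x2.
Qed.

Lemma blk_eq x y : y \in blk x -> blk y = blk x.
Proof. move=> h; exact: (Inds_eq (blk_Inds y) (blk_Inds x) (blk_self y) h). Qed.

Lemma Inds_blk B x : B \in Inds C -> x \in B -> B = blk x.
Proof. move=> hB xB; exact: Inds_eq hB (blk_Inds x) xB (blk_self x). Qed.

Lemma SHP x (Y : {set T}) : reflect (exists2 y, y \in Y & y \in blk x) (x \in SH C Y).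
Proof.
apply: (iffP bigcupP).
  case=> K /andP[KC /set0Pn[y /setIP[yK yY]]] xK.
  by exists y => //; apply/bigcupP; exists K => //; rewrite KC.
case=> y yY /bigcupP[K /andP[KC xK] yK].
exists K => //; rewrite KC; apply/set0Pn; exists y; exact/setIP.
Qed.

Lemma indepP (Y : {set T}) : reflect (forall x y, x \in Y -> y \in Y -> y \in blk x -> x = y) (indepSH C Y).
Proof.
apply: (iffP forallP).
- move=> h x y xY yY yb; apply/eqP; apply/negPn/negP => ne.
  move: (h x); rewrite xY /= => /negP; apply; apply/SHP; exists y => //.
  by rewrite in_setD1 eq_sym ne yY.
- move=> h x; apply/implyP => xY; apply/negP => /SHP [y /setD1P [ne yY] yb].
  by have e := h x y xY yY yb; rewrite e eqxx in ne.
Qed.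

Lemma indep_card (Y : {set T}) : indepSH C Y <-> (forall B, B \in Inds C -> #|B :&: Y| <= 1).
Proof.
split.
- move/indepP=> h B hB; apply/card_le1P => x /setIP[xB xY] y.
  apply/idP/idP; last by move/eqP->; apply/setIP.
  case/setIP => yB yY; apply/eqP; apply: esym; apply: h => //.
  by rewrite -(Inds_blk hB xB).
- move=> h; apply/indepP => x y xY yY yb.
  have /card_le1P := h _ (blk_Inds x).
  have xI : x \in blk x :&: Y by apply/setIP; split => //; exact: blk_self.
  move/(_ x xI y); rewrite inE yb yY /= => /esym/eqP; done.
Qed.

Lemma dep_iff (X : {set T}) : ~~ indepSH C X <-> (exists2 B, B \in Inds C & 1 < #|B :&: X|).
Proof.
split.
- move=> hn; case: (boolP [exists B in Inds C, 1 < #|B :&: X|]) => [/existsP[B /andP[]] | /existsPn hno]; first by exists B.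
  exfalso; move/negP: hn; apply; apply/indep_card => B hB; move: (hno B).
  by rewrite hB /= -leqNgt.
- case=> B hB h1; apply/negP => /indep_card /(_ B hB); by rewrite leqNgt h1.
Qed.

Lemma pair_dep x y B : B \in Inds C -> x \in B -> y \in B -> x != y ->
  ~~ indepSH C [set x; y].
Proof.
move=> hB xB yB ne; apply/negP => /indepP h.
have e := h x y (set21 x y) (set22 x y).
by move: ne; rewrite e ?eqxx // -(Inds_blk hB xB).
Qed.

Lemma circ_iff (X : {set T}) :
  circuitSH C X <-> (exists2 B, B \in Inds C & (X \subset B) && (#|X| == 2)).
Proof.
split.
- case/minsetP => /dep_iff [B hB /card_gt1P [x [y [/setIP[xB xX] /setIP[yB yX] ne]]]] hmin.
  have hd := pair_dep hB xB yB ne.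
  have eX : [set x; y] = X.
    apply: hmin => //; apply/subsetP => z; rewrite !inE => /orP[]/eqP->//.
  exists B => //; rewrite -eX cards2 ne andbT; apply/subsetP => z.
  by rewrite !inE => /orP[]/eqP->.
- case=> B hB /andP[XB /cards2P [x [y [ne eX]]]].
  have xB : x \in B by apply: (subsetP XB); rewrite eX set21.
  have yB : y \in B by apply: (subsetP XB); rewrite eX set22.
  apply/minsetP; split; first by rewrite eX; exact: pair_dep hB xB yB ne.
  move=> Y /dep_iff [B' _ h1] YX; apply/eqP; rewrite eqEcard YX /=.
  rewrite eX cards2 ne.
  exact: leq_trans h1 (subset_leq_card (subsetIr _ _)).
Qed.

Lemma indep_card_img (Y : {set T}) : indepSH C Y -> #|blk @: Y| = #|Y|.
Proof.
move/indepP=> h; apply: card_in_imset => x y xY yY e; apply: h => //.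
by rewrite e blk_self.
Qed.

Lemma rank_eq (X : {set T}) :
  rankSH C X = #|[set B in Inds C | B :&: X != set0]|.
Proof.
apply/eqP; rewrite eqn_leq; apply/andP; split.
  apply/bigmax_leqP => Y /andP[YX iY]; rewrite -indep_card_img //.
  apply: subset_leq_card; apply/subsetP => B /imsetP[y yY ->].
  rewrite inE blk_Inds /=; apply/set0Pn; exists y.
  by rewrite inE blk_self (subsetP YX).
pose Y := [set y in X | [pick w in blk y :&: X] == Some y].
have YX : Y \subset X by apply/subsetP => y; rewrite inE => /andP[].
have iY : indepSH C Y.
  apply/indepP => x y; rewrite !inE => /andP[xX /eqP px] /andP[yX /eqP py] yb.
  by move: py; rewrite (blk_eq yb) px => -[].
have eS : blk @: Y = [set B in Inds C | B :&: X != set0].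
  apply/setP => B; rewrite inE; apply/imsetP/andP.
    case=> y; rewrite inE => /andP[yX _] ->; split; first exact: blk_Inds.
    by apply/set0Pn; exists y; rewrite inE blk_self yX.
  case=> hB /set0Pn[z /setIP[zB zX]]; rewrite (Inds_blk hB zB).
  have [y /setIP[yb yX] E] : exists2 y, y \in blk z :&: X & [pick w in blk z :&: X] = Some y.
    case: pickP => [y hy | h0]; first by exists y.
    by have := h0 z; rewrite /= inE blk_self zX.
  exists y; last by rewrite (blk_eq yb).
  by rewrite inE yX (blk_eq yb) E /=.
rewrite -eS indep_card_img //.
rewrite /rankSH. apply: leq_bigmax_cond.
by rewrite YX iY.
Qed.

Lemma base_iff (X : {set T}) :
  baseSH C X <-> (forall B, B \in Inds C -> #|X :&: B| = 1).
Proof.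
split.
- case/maxsetP => iX hmax B hB.
  have le : #|X :&: B| <= 1 by rewrite setIC; exact: (proj1 (indep_card X) iX).
  apply/eqP; rewrite eqn_leq le /= lt0n; apply/negP => /eqP/cards0_eq h0.
  case/imsetP: hB => z _ Bz.
  have nX : forall w, w \in X -> w \in blk z -> False.
    move=> w wX wb; have : w \in X :&: B by rewrite inE wX Bz.
    by rewrite h0 inE.
  have iY : indepSH C (z |: X).
    move/indepP: iX => iX.
    apply/indepP => x y /setU1P[->|xX] /setU1P[->|yX] yb //.
    + by case: (nX y yX yb).
    + have e := blk_eq yb; case: (nX x xX); rewrite e; exact: blk_self.
    + exact: iX.
  have := hmax _ iY (subsetUr _ _) => e.
  have zX : z \in X by rewrite -e setU11.
  by case: (nX z zX (blk_self z)).
- move=> h; apply/maxsetP; split.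
    by apply/indep_card => B hB; rewrite setIC h.
  move=> Y /indepP iY XY; apply/eqP; rewrite eqEsubset; apply/andP; split => //.
  apply/subsetP => y yY.
  have /card_gt0P [x /setIP[xX xb]] : 0 < #|X :&: blk y| by rewrite h ?blk_Inds.
  by rewrite (iY y x yY (subsetP XY x xX) xb).
Qed.

Lemma count_bases :
  #|[set X : {set T} | baseSH C X]| = \prod_(B in Inds C) #|B|.
Proof.
case: (set_0Vmem [set: T]) => [hT | [y0 _]].
  have h0 : forall x : T, False by move=> x; have := in_setT x; rewrite hT inE.
  have allX : forall X : {set T}, X = set0 by move=> X; apply/setP=> x; have := h0 x.
  rewrite big_pred0; last by move=> B /=; apply/negbTE/negP => /imsetP[x]; have := h0 x.
  have -> : [set X : {set T} | baseSH C X] = [set set0].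
    apply/setP => X; rewrite inE (allX X) in_set1 eqxx.
    by apply/base_iff => B /imsetP[x]; have := h0 x.
  by rewrite cards1.
pose Fam := pfamily y0 (Inds C) (fun B : {set T} => B).
pose phi (f : {ffun {set T} -> T}) := [set f B | B in Inds C].
have famP : forall f, f \in Fam -> forall B, B \in Inds C -> f B \in B.
  by move=> f /pfamilyP[_ h] B hB; exact: h.
have famN : forall f, f \in Fam -> forall B, B \notin Inds C -> f B = y0.
  move=> f /pfamilyP[hs _] B hB; apply/eqP; apply/negPn/negP => ne.
  by move: hB; rewrite (subsetP hs B) //= inE ne.
have phiI : forall f, f \in Fam -> forall B, B \in Inds C -> phi f :&: B = [set f B].
  move=> f hf B hB; apply/setP => w; rewrite !inE; apply/andP/eqP.
    case=> /imsetP[B' hB' ->] wB; congr (f _).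
    exact: (Inds_eq hB' hB (famP f hf B' hB') wB).
  by move=> ->; split; [exact: imset_f | exact: famP].
have -> : [set X : {set T} | baseSH C X] = phi @: Fam.
  apply/setP => X; rewrite inE; apply/idP/imsetP.
    move/base_iff => hX.
    pose f := [ffun B => if B \in Inds C then odflt y0 [pick x in X :&: B] else y0].
    have fB : forall B, B \in Inds C -> X :&: B = [set f B].
      move=> B hB; have /cards1P[x ex] : #|X :&: B| == 1 by rewrite hX.
      rewrite ex ffunE hB; congr [set _].
      case: pickP => [w /=| h1]; first by rewrite ex in_set1 => /eqP->.
      by have := h1 x; rewrite /= ex set11.
    have hf : f \in Fam.
      apply/pfamilyP; split.
        apply/subsetP => B; rewrite inE ffunE; case: ifP => //; by rewrite eqxx.
      move=> B hB; have : f B \in X :&: B by rewrite fB // set11.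
      by case/setIP.
    exists f => //; apply/setP => w; apply/idP/imsetP.
      move=> wX; exists (blk w); first exact: blk_Inds.
      have : w \in X :&: blk w by rewrite inE wX blk_self.
      by rewrite fB ?blk_Inds // in_set1 => /eqP.
    case=> B hB ->; have : f B \in X :&: B by rewrite fB // set11.
    by case/setIP.
  case=> f hf ->; apply/base_iff => B hB; by rewrite phiI // cards1.
rewrite card_in_imset; last first.
  move=> f g hf hg e; apply/ffunP => B.
  case: (boolP (B \in Inds C)) => hB; last by rewrite !famN.
  have := phiI f hf B hB; rewrite e phiI // => /setP/(_ (g B)).
  by rewrite !in_set1 eqxx => /esym/eqP.
rewrite card_pfamily foldrE big_map big_enum /=.
by apply: eq_bigr => B _; apply: eq_card => x.
Qed.

End P.

Theorem proposition12 (T : finType) (C : {set {set T}}) :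
  is_covering C -> partition_hyp C ->
  (* (1) *)
  ((forall X : {set T},
      baseSH C X <-> (forall B, B \in Inds C -> #|X :&: B| = 1)) /\
   #|[set X : {set T} | baseSH C X]| = \prod_(B in Inds C) #|B|) /\
  (* (2) *)
  (forall X : {set T},
      rankSH C X = #|[set B in Inds C | B :&: X != set0]|) /\
  (* (3) *)
  (forall X : {set T},
      ~~ indepSH C X <-> (exists2 B, B \in Inds C & 1 < #|B :&: X|)) /\
  (* (4) *)
  (forall X : {set T},
      circuitSH C X <-> (exists2 B, B \in Inds C & (X \subset B) && (#|X| == 2))).
Proof.
move=> hc hp; split; [split|split; [|split]].
- exact: base_iff.
- exact: count_bases.
- exact: rank_eq.
- exact: dep_iff.
- exact: circ_iff.
Qed.
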